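(* Let $p$ be a prime, $d\ge 2$ and $n\ge 2p-1$. Let $N_p(\le n,p^d)=p^{d(n+1)}$ be the number of polynomials $a_nx^n+\cdots+a_1x+a_0$ with all $a_k\in\{0,\dots,p^d-1\}$, and let $N_{pp}(\le n,p^d)$ be the number of those which are permutation polynomials modulo $p^d$. Then $$\frac{N_{pp}(\le n,p^d)}{N_p(\le n,p^d)}=\frac{(p-1)^p\,(p-1)!}{p^{2p-1}}.$$
   Context: An integer polynomial $f$ is a permutation polynomial modulo $M$ if the map $x\mapsto f(x)\bmod M$ is a bijection of $\{0,\dots,M-1\}$. *)

(* Defs.v *)
From mathcomp Require Import all_boot all_order all_algebra.
Set Implicit Arguments. Unset Strict Implicit. Unset Printing Implicit Defensive.

Definition coef_eval (n M : nat) (a : {ffun 'I_n.+1 -> 'I_M}) (x : nat) : nat :=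
  \sum_(k < n.+1) a k * x ^ k.

Definition is_perm_poly_mod (M : nat) (f : nat -> nat) : bool :=
  [forall y : 'I_M, #|[set x : 'I_M | f x %% M == y]| == 1].

Definition N_p (n M : nat) : nat := #|{ffun 'I_n.+1 -> 'I_M}|.

Definition N_pp (n M : nat) : nat :=
  #|[set a : {ffun 'I_n.+1 -> 'I_M} | is_perm_poly_mod M (coef_eval a)]|.

(* Main.v *)
Require Import Defs.
From mathcomp Require Import all_boot all_order all_algebra.
From mathcomp Require Import finfield zify.
Import GRing.Theory.
Set Implicit Arguments. Unset Strict Implicit. Unset Printing Implicit Defensive.

Lemma pow_taylor x h k : (x + h) ^ k = x ^ k + k * x ^ k.-1 * h %[mod h ^ 2].
Proof.
elim: k => [|k IH]; first by rewrite !expn0.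
rewrite expnSr -modnMml IH modnMml.
case: k {IH} => [|k].
  by rewrite expn0 expn1; congr (_ %% _); lia.
have -> : (x ^ k.+1 + k.+1 * x ^ k * h) * (x + h)
        = (k.+1 * x ^ k) * h ^ 2 + (x ^ k.+2 + k.+2 * x ^ k.+1 * h).
  rewrite !expnS expn0; move: (x ^ k) => X.
  nia.
by rewrite modnMDl.
Qed.

Lemma big_modn (I : finType) (F G : I -> nat) m :
  (forall i, F i = G i %[mod m]) -> \sum_i F i = \sum_i G i %[mod m].
Proof.
move=> H; rewrite -(modn_summ _ _ F) -(modn_summ _ _ G).
by congr (_ %% _); apply: eq_bigr => i _; rewrite H.
Qed.

Definition Dn n M (a : {ffun 'I_n.+1 -> 'I_M}) (x : nat) : nat :=
  \sum_(k < n.+1) a k * k * x ^ k.-1.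

Lemma coef_taylor n M (a : {ffun 'I_n.+1 -> 'I_M}) x h :
  coef_eval a (x + h) = coef_eval a x + h * Dn a x %[mod h ^ 2].
Proof.
rewrite /coef_eval /Dn big_distrr -big_split /=.
apply: big_modn => k.
rewrite -modnMmr pow_taylor modnMmr; congr (_ %% _).
move: (x ^ k.-1) => X; nia.
Qed.

Lemma mod_weaken d1 d2 a b : (d1 %| d2)%N -> a = b %[mod d2] -> a = b %[mod d1].
Proof. by move=> dv e; rewrite -(modn_dvdm a dv) e modn_dvdm. Qed.
Local Open Scope ring_scope.
Definition polyb p n (b : {ffun 'I_n.+1 -> 'F_p}) : {poly 'F_p} :=
  \poly_(i < n.+1) b (inord i).
Definition red p n M (a : {ffun 'I_n.+1 -> 'I_M}) : {ffun 'I_n.+1 -> 'F_p} :=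
  [ffun i => ((a i : nat)%:R)].

Lemma bridge_f p n M (a : {ffun 'I_n.+1 -> 'I_M}) x :
  (coef_eval a x)%:R = (polyb (red p a)).[x%:R].
Proof.
rewrite horner_poly /coef_eval natr_sum; apply: eq_bigr => i _.
by rewrite inord_val ffunE natrM natrX.
Qed.

Lemma bridge_D p n M (a : {ffun 'I_n.+1 -> 'I_M}) x :
  (Dn a x)%:R = (polyb (red p a))^`().[x%:R].
Proof.
rewrite /Dn natr_sum /polyb poly_def raddf_sum horner_sum; apply: eq_bigr => i _.
rewrite /= derivZ derivXn hornerZ hornerMn hornerXn inord_val ffunE !natrM natrX.
by rewrite -mulrA; congr (_ * _); rewrite mulr_natl.
Qed.

Lemma natFp_eq p (Hp : prime p) (m k : nat) :
  ((m%:R : 'F_p) == k%:R) = (m == k %[mod p])%N.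
Proof. by rewrite -val_eqE /= !val_Fp_nat. Qed.

Lemma natFp0 p (Hp : prime p) (m : nat) : ((m%:R : 'F_p) == 0) = (p %| m)%N.
Proof. by rewrite (dvdn_pcharf (pchar_Fp Hp)). Qed.

Lemma Fp_valE p (Hp : prime p) (z : 'F_p) : z = (val z)%:R.
Proof. by rewrite natr_Zp. Qed.

Lemma Fp_val_lt p (Hp : prime p) (z : 'F_p) : (val z < p)%N.
Proof. by case: z => /= m; rewrite Fp_cast. Qed.

Lemma perm_inj M (f : nat -> nat) : (0 < M)%N ->
  is_perm_poly_mod M f <->
  (forall x y, x < M -> y < M -> f x = f y %[mod M] -> x = y)%N.
Proof.
move=> M0; split.
- move=> /forallP H x y xM yM e.
  have /cards1P [z Hz] := H (Ordinal (ltn_pmod (f x) M0)).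
  have hx : Ordinal xM \in [set z : 'I_M | f z %% M == Ordinal (ltn_pmod (f x) M0)]%N.
    by rewrite inE.
  have hy : Ordinal yM \in [set z : 'I_M | f z %% M == Ordinal (ltn_pmod (f x) M0)]%N.
    by rewrite inE /= e.
  rewrite Hz !inE in hx hy.
  by have := congr1 val (etrans (eqP hx) (esym (eqP hy))).
- move=> H.
  pose g (z : 'I_M) : 'I_M := Ordinal (ltn_pmod (f z) M0).
  have ginj : injective g.
    by move=> u v /(congr1 val) /= e; apply: val_inj; exact: H (ltn_ord u) (ltn_ord v) e.
  have [g' gK g'K] := injF_bij ginj.
  apply/forallP => y; apply/cards1P; exists (g' y); apply/setP => z; rewrite !inE.
  have -> : (f z %% M == y)%N = (g z == y) by [].
  apply/eqP/eqP => [<-|->]; [by rewrite gK | by rewrite g'K].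
Qed.

Lemma stepA p d n (a : {ffun 'I_n.+1 -> 'I_(p ^ d)}) : prime p -> (2 <= d)%N ->
  (forall x y, x < p ^ d -> y < p ^ d ->
       coef_eval a x = coef_eval a y %[mod p ^ d] -> x = y)%N
  <-> ((forall u v : 'F_p, (polyb (red p a)).[u] = (polyb (red p a)).[v] -> u = v)
       /\ (forall u : 'F_p, (polyb (red p a))^`().[u] != 0)).
Proof.
move=> Hp d2; set P := polyb (red p a); set f := coef_eval a.
have p0 : (0 < p)%N := prime_gt0 Hp.
have p1 : (1 < p)%N := prime_gt1 Hp.
have Ef x : (f x)%:R = P.[x%:R] := bridge_f p a x.
have ED x : (Dn a x)%:R = P^`().[x%:R] := bridge_D p a x.
have pd0 : (0 < p ^ d)%N by rewrite expn_gt0 p0.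
have pdvd : (p %| p ^ d)%N by rewrite dvdn_exp //; lia.
split.
- move=> Hinj; split.
  + have pd : (p <= p ^ d)%N by apply: dvdn_leq.
    pose g (z : 'I_(p ^ d)) : 'I_(p ^ d) := Ordinal (ltn_pmod (f z) pd0).
    have ginj : injective g.
      by move=> u v /(congr1 val) /= e; apply: val_inj; exact: Hinj (ltn_ord u) (ltn_ord v) e.
    have [g' gK g'K] := injF_bij ginj.
    have surj : forall w : 'F_p, exists u : 'F_p, P.[u] = w.
      move=> w; have wl : (val w < p ^ d)%N := leq_trans (Fp_val_lt Hp w) pd.
      exists ((val (g' (Ordinal wl)))%:R); rewrite -Ef.
      have /(congr1 val) /= e : g (g' (Ordinal wl)) = Ordinal wl by rewrite g'K.
      rewrite [RHS](Fp_valE Hp w); apply/eqP; rewrite natFp_eq //; apply/eqP.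
      apply: (mod_weaken pdvd); rewrite -/f in e.
      by rewrite e modn_small.
    have [s sK] := fin_all_exists surj.
    have sinj : injective s by move=> w1 w2 e; rewrite -(sK w1) -(sK w2) e.
    have [s' ss' s's] := injF_bij sinj.
    have hs u : P.[u] = s' u by rewrite -{1}(s's u) sK.
    by move=> u v e; rewrite -(s's u) -(s's v) -!hs e.
  + move=> u; apply/negP => /eqP D0.
    set x := val u; have xp := Fp_val_lt Hp u.
    have Hdx : (p %| Dn a x)%N by rewrite -(natFp0 Hp) ED -(Fp_valE Hp u) D0.
    have [e de] : exists e, d = e.+2 by exists (d - 2)%N; lia.
    have Q0 : (0 < p ^ e.+1)%N by rewrite expn_gt0 p0.
    have Qp : (p <= p ^ e.+1)%N by apply: dvdn_leq => //; rewrite dvdn_exp.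
    have pe : (p ^ d = p * p ^ e.+1)%N by rewrite de expnS.
    have : x = (x + p ^ e.+1)%N.
      apply: Hinj.
      - by rewrite pe; nia.
      - by rewrite pe; nia.
      have T := coef_taylor a x (p ^ e.+1).
      have dv : (p ^ d %| (p ^ e.+1) ^ 2)%N by rewrite de -expnM dvdn_exp2l //; lia.
      rewrite -/f in T; rewrite (mod_weaken dv T).
      have h0 : ((p ^ e.+1 * Dn a x) %% p ^ d = 0)%N.
        by move: (Dn a x) Hdx => D HD; apply/eqP; rewrite -/(dvdn _ _) pe [X in (_ %| X)%N]mulnC dvdn_pmul2r.
      by rewrite -modnDmr h0 addn0.
    lia.
- case=> Hi Hd x y.
  wlog: x y / (x <= y)%N.
    move=> W xd yd e; case: (leqP x y) => h; first exact: W.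
    by symmetry; apply: (W y x (ltnW h) yd xd); rewrite e.
  move=> xy xd yd e.
  have key : forall k, (0 < k <= d)%N -> (p ^ k %| y - x)%N.
    elim=> [|k IH] //; case: k IH => [|k] IH /andP [_ kd].
    + rewrite expn1 -eqn_mod_dvd // -natFp_eq //.
      apply/eqP; apply: Hi; rewrite -!Ef; apply/eqP; rewrite natFp_eq //.
      by apply/eqP; symmetry; exact: (mod_weaken pdvd e).
    + have IH' := IH (ltnW kd).
      set K := k.+1 in IH' kd *.
      have [t ht] := dvdnP IH'.
      have hy : y = (x + p ^ K * t)%N by rewrite mulnC -ht; lia.
      have T := coef_taylor a x (p ^ K * t).
      have dv : (p ^ K.+1 %| (p ^ K * t) ^ 2)%N.
        rewrite expnSr (_ : (p ^ K * t) ^ 2 = p ^ K * (p ^ K * t ^ 2))%N; last first.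
          by rewrite expnMn (expnS (p ^ K)) expn1 mulnA.
        by rewrite dvdn_pmul2l ?expn_gt0 ?p0 // dvdn_mulr // dvdn_exp.
      have e' := mod_weaken (dvdn_exp2l p kd) e.
      rewrite -hy -/f in T; have T' := mod_weaken dv T.
      rewrite T' -{1}(addn0 (f x)) in e'.
      move/eqP: e'; rewrite eq_sym eqn_modDl mod0n => /eqP /eqP.
      rewrite -/(dvdn _ _) -mulnA expnSr dvdn_pmul2l ?expn_gt0 ?p0 //.
      rewrite Euclid_dvdM // => /orP [pt|pD]; last first.
        by move: (Hd x%:R); rewrite -ED natFp0 // pD.
      by rewrite ht (mulnC t) dvdn_pmul2l ?expn_gt0 ?p0.
  have := key d; rewrite (leq_trans _ d2) // leqnn => /(_ isT) dv.
  case: (posnP (y - x)) => [|pos]; first by lia.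
  by have := dvdn_leq pos dv; lia.
Qed.

Lemma double_root p (Hp : prime p) (R : {poly 'F_p}) : (size R <= 2 * p)%N ->
  (forall z, R.[z] = 0) -> (forall z, R^`().[z] = 0) -> R = 0.
Proof.
move=> sR H0 H1.
set G := \prod_(z <- enum 'F_p) ('X - z%:P).
have Gdiv Q : (forall z, Q.[z] = 0) -> G %| Q.
  move=> HQ; apply: uniq_roots_dvdp; last by rewrite uniq_rootsE enum_uniq.
  by apply/allP => z _; apply/rootP; exact: HQ.
have sG : size G = p.+1 by rewrite size_prod_XsubC -cardE card_Fp.
have G0 : G != 0 by rewrite -size_poly_gt0 sG.
have GE : G = 'X^p - 'X.
  have h := finField_genPoly 'F_p; rewrite (card_Fp Hp) in h.
  rewrite h /G big_enum /=.
  by apply: eq_bigl => x; rewrite inE.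
have Gz z : G.[z] = 0 by apply/rootP; rewrite root_prod_XsubC mem_enum.
have G'z z : G^`().[z] = -1.
  rewrite GE derivB derivXn derivX hornerD hornerN hornerMn hornerC.
  by rewrite (mulrn_pchar (pchar_Fp Hp)) add0r.
have [Q RQ] : exists Q, R = Q * G by apply/dvdpP; exact: Gdiv.
have HQ z : Q.[z] = 0.
  have := H1 z; rewrite RQ derivM hornerD !hornerM G'z Gz mulr0 add0r mulrN1.
  by move/eqP; rewrite oppr_eq0 => /eqP.
have [Q2 QQ] : exists Q2, Q = Q2 * G by apply/dvdpP; exact: Gdiv.
rewrite RQ QQ; case: (eqVneq Q2 0) => [->|Q20]; first by rewrite !mul0r.
exfalso; move: sR; rewrite RQ QQ !size_mul ?mulf_neq0 // sG.
have : (0 < size Q2)%N by rewrite size_poly_gt0.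
move: (size Q2) => s hs; clear -hs; move=> h.
lia.
Qed.

Lemma card_preim_const (I J : finType) (g : I -> J) (Q : pred J) (c : nat) :
  (forall j, Q j -> #|[set i | g i == j]| = c) ->
  #|[set i | Q (g i)]| = (#|[set j | Q j]| * c)%N.
Proof.
move=> H.
rewrite -sum1_card (eq_bigl (fun i => Q (g i))) => [|i]; last by rewrite inE.
rewrite (partition_big g Q) //=.
rewrite (eq_bigr (fun _ => c)) => [|j Qj]; last first.
  rewrite -(H j Qj) -sum1_card; apply: eq_bigl => i; rewrite inE.
  by case: (eqVneq (g i) j) => [->|]; rewrite ?Qj ?andbF.
rewrite sum_nat_const; congr (_ * _)%N.
by apply: eq_card => j; rewrite inE.
Qed.

Definition Phi p (P : {poly 'F_p}) : ({ffun 'F_p -> 'F_p} * {ffun 'F_p -> 'F_p}) :=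
  ([ffun z => P.[z]], [ffun z => P^`().[z]]).

Lemma PhiD p (P Q : {poly 'F_p}) : Phi (P + Q) = Phi P + Phi Q.
Proof.
rewrite /Phi; congr (_, _); apply/ffunP => z; rewrite !ffunE ?derivD hornerD //.
Qed.

Lemma PhiN p (P : {poly 'F_p}) : Phi (- P) = - Phi P.
Proof.
rewrite /Phi; congr (_, _); apply/ffunP => z; rewrite !ffunE ?derivN hornerN //.
Qed.

Lemma polybD p n (b1 b2 : {ffun 'I_n.+1 -> 'F_p}) :
  polyb (b1 + b2) = polyb b1 + polyb b2.
Proof.
apply/polyP => i; rewrite coefD !coef_poly; case: ifP => _; rewrite ?ffunE ?addr0 //.
Qed.

Lemma polybN p n (b : {ffun 'I_n.+1 -> 'F_p}) : polyb (- b) = - polyb b.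
Proof.
apply/polyP => i; rewrite coefN !coef_poly; case: ifP => _; rewrite ?ffunE ?oppr0 //.
Qed.

Lemma fiber_card p n (b0 : {ffun 'I_n.+1 -> 'F_p}) :
  #|[set b : {ffun 'I_n.+1 -> 'F_p} | Phi (polyb b) == Phi (polyb b0)]| =
  #|[set b : {ffun 'I_n.+1 -> 'F_p} | Phi (polyb b) == 0]|.
Proof.
rewrite -[RHS](card_imset _ (addrI b0)); apply: eq_card => b.
rewrite inE; apply/eqP/imsetP => [e|[k]].
  exists (- b0 + b); last by rewrite addNKr.
  by rewrite inE polybD PhiD polybN PhiN e addNr.
rewrite inE => /eqP k0 ->.
by rewrite polybD PhiD k0 addr0.
Qed.

Lemma polyb_coef p n (b : {ffun 'I_n.+1 -> 'F_p}) (i : 'I_n.+1) : (polyb b)`_i = b i.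
Proof. by rewrite coef_poly ltn_ord inord_val. Qed.

Lemma Phi_surj p n (Hp : prime p) : (2 * p <= n.+1)%N ->
  forall j, exists b : {ffun 'I_n.+1 -> 'F_p}, Phi (polyb b) = j.
Proof.
move=> pn j.
have p0 : (0 < p)%N := prime_gt0 Hp.
set m := (2 * p).-1.
have mE : m.+1 = (2 * p)%N by rewrite /m prednK // muln_gt0 p0.
pose psi (l : {ffun 'I_m.+1 -> 'F_p}) := Phi (polyb l).
have psi_inj : injective psi.
  move=> l1 l2 e.
  have [e1 e2] : [ffun z => (polyb l1).[z]] = [ffun z => (polyb l2).[z]] /\
                 [ffun z => (polyb l1)^`().[z]] = [ffun z => (polyb l2)^`().[z]].
    by move: e; rewrite /psi /Phi => -[-> ->].
  have R0 : polyb l1 - polyb l2 = 0.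
    apply: (double_root Hp).
    - rewrite -mE; apply: leq_trans (size_add _ _) _.
      by rewrite size_opp geq_max !size_poly.
    - move=> z; move/ffunP: e1 => /(_ z); rewrite !ffunE hornerD hornerN => ->.
      by rewrite subrr.
    - move=> z; move/ffunP: e2 => /(_ z); rewrite !ffunE derivB hornerD hornerN => ->.
      by rewrite subrr.
  move/eqP: R0; rewrite subr_eq0 => /eqP e3.
  by apply/ffunP => i; rewrite -!polyb_coef e3.
have : j \in codom psi.
  apply: inj_card_onto => //.
  rewrite card_prod !card_ffun !card_Fp // card_ord mE -expnD addnn -mul2n.
  by [].
case/codomP => l ->.
exists [ffun i : 'I_n.+1 => (polyb l)`_i]; congr Phi.
apply/polyP => i; rewrite coef_poly; case: ifP => [ni|ni].
  by rewrite ffunE inordK.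
rewrite nth_default //; apply: leq_trans (size_poly _ _) _.
by rewrite mE (leq_trans pn) // leqNgt ni.
Qed.

Lemma card_res p d (Hp : prime p) (d0 : (0 < d)%N) (z : 'F_p) :
  #|[set x : 'I_(p ^ d) | ((x : nat)%:R : 'F_p) == z]| = (p ^ d.-1)%N.
Proof.
have p0 : (0 < p)%N := prime_gt0 Hp.
set r := val z; have rp : (r < p)%N := Fp_val_lt Hp z.
set P := (p ^ d.-1)%N.
have pdE : (p ^ d = p * P)%N by rewrite /P -expnS prednK.
have hlt (t : 'I_P) : (r + p * t < p ^ d)%N.
  by rewrite pdE; have := ltn_ord t; nia.
pose h (t : 'I_P) : 'I_(p ^ d) := Ordinal (hlt t).
have hinj : injective h.
  move=> t1 t2 /(congr1 val) /= /addnI /eqP; rewrite eqn_pmul2l // => /eqP e.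
  exact: val_inj.
rewrite -[RHS](card_ord P) -cardsT -(card_imset _ hinj); apply: eq_card => x.
rewrite inE; apply/eqP/imsetP => [e|[t _ ->]].
  have := congr1 val e; rewrite /= val_Fp_nat // => xr.
  have tl : (x %/ p < P)%N by rewrite ltn_divLR // mulnC -pdE.
  exists (Ordinal tl); first by rewrite inE.
  apply: val_inj => /=; rewrite {1}(divn_eq x p) xr -/r; lia.
rewrite [RHS](Fp_valE Hp z); apply/eqP; rewrite natFp_eq //=.
by rewrite addnC mulnC modnMDl.
Qed.

Lemma foldr_mul_const (T : finType) (f : T -> nat) c :
  (forall x, f x = c) -> foldr muln 1%N [seq f x | x : T] = (c ^ #|T|)%N.
Proof.
move=> H; rewrite cardE /image_mem; elim: (enum_mem _) => //= x s ->.
by rewrite H expnS.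
Qed.

Lemma card_red p d n (Hp : prime p) (d0 : (0 < d)%N) (b : {ffun 'I_n.+1 -> 'F_p}) :
  #|[set a : {ffun 'I_n.+1 -> 'I_(p ^ d)} | red p a == b]| = ((p ^ d.-1) ^ n.+1)%N.
Proof.
pose F (i : 'I_n.+1) := [pred x : 'I_(p ^ d) | ((x : nat)%:R : 'F_p) == b i].
have -> : #|[set a : {ffun 'I_n.+1 -> 'I_(p ^ d)} | red p a == b]| = #|family F|.
  apply: eq_card => a; rewrite inE; apply/eqP/familyP => [e i|H].
    by rewrite /F inE -e ffunE.
  by apply/ffunP => i; rewrite ffunE; apply/eqP; have := H i; rewrite /F inE.
rewrite card_family.
have cF i : #|F i| = (p ^ d.-1)%N.
  by rewrite -(card_res Hp d0 (b i)); apply: eq_card => x; rewrite !inE.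
by rewrite (foldr_mul_const cF) card_ord.
Qed.

Local Close Scope ring_scope.

Theorem mainTheorem13 (p d n : nat) :
  prime p -> (2 <= d)%N -> (2 * p - 1 <= n)%N ->
  N_p n (p ^ d) = p ^ (d * n.+1) /\
  ((N_pp n (p ^ d))%:R / (N_p n (p ^ d))%:R : rat)%R
    = (((p - 1) ^ p * (p - 1)`!)%:R / (p ^ (2 * p - 1))%:R)%R.
Proof.
move=> Hp d2 hn.
have p0 : 0 < p := prime_gt0 Hp.
have d0 : 0 < d by lia.
have pd0 : 0 < p ^ d by rewrite expn_gt0 p0.
have pn : 2 * p <= n.+1 by lia.
have NpE : N_p n (p ^ d) = p ^ (d * n.+1).
  by rewrite /N_p card_ffun !card_ord -expnM mulnC.
split => //.
set S := setX [set u : {ffun 'F_p -> 'F_p} | injectiveb u]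
              [set v : {ffun 'F_p -> 'F_p} | [forall z, v z != 0%R]].
have cardS : #|S| = p`! * (p - 1) ^ p.
  rewrite cardsX card_inj_ffuns card_Fp // ffactnn; congr (_ * _).
  have -> : #|[set v : {ffun 'F_p -> 'F_p} | [forall z, v z != 0%R]]|
          = #|ffun_on_mem 'F_p (mem (predC1 (0%R : 'F_p)))|.
    apply: eq_card => v; rewrite inE.
    apply/forallP/ffun_onP => H z; first by rewrite inE; exact: H.
    by have := H z; rewrite inE.
  by rewrite card_ffun_on cardC1 card_Fp // subn1.
have key (a : {ffun 'I_n.+1 -> 'I_(p ^ d)}) : is_perm_poly_mod (p ^ d) (coef_eval a) = (Phi (polyb (red p a)) \in S).
  apply/idP/idP.
  - move/(perm_inj _ pd0)/(stepA a Hp d2) => [Hi Hd].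
    rewrite /Phi in_setX !inE; apply/andP; split.
      by apply/injectiveP => u v; rewrite !ffunE; exact: Hi.
    by apply/forallP => z; rewrite ffunE; exact: Hd.
  - rewrite /Phi in_setX !inE => /andP [/injectiveP Hi /forallP Hd].
    apply/(perm_inj _ pd0)/(stepA a Hp d2); split => [u v e|u].
      by apply: Hi; rewrite !ffunE; exact: e.
    by have := Hd u; rewrite ffunE.
set K := [set b : {ffun 'I_n.+1 -> 'F_p} | Phi (polyb b) == 0%R].
have fib j : #|[set b : {ffun 'I_n.+1 -> 'F_p} | Phi (polyb b) == j]| = #|K|.
  by have [b0 <-] := Phi_surj Hp pn j; exact: fiber_card.
have cB : #|[set b : {ffun 'I_n.+1 -> 'F_p} | Phi (polyb b) \in S]| = #|S| * #|K|.
  rewrite (card_preim_const (g := fun b => Phi (polyb b)) (Q := mem S) (c := #|K|)) //.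
  by congr (_ * _); apply: eq_card => j; rewrite inE.
have cK : #|K| = p ^ (n.+1 - 2 * p).
  have := card_preim_const (g := fun b : {ffun 'I_n.+1 -> 'F_p} => Phi (polyb b))
            (Q := xpredT) (c := #|K|) (fun j _ => fib j).
  have -> : #|[set b : {ffun 'I_n.+1 -> 'F_p} | xpredT (Phi (polyb b))]| = p ^ n.+1.
    by rewrite cardsT card_ffun card_Fp // card_ord.
  have -> : #|[set j : ({ffun 'F_p -> 'F_p} * {ffun 'F_p -> 'F_p})%type | xpredT j]|
          = p ^ (2 * p).
    by rewrite cardsT card_prod !card_ffun card_Fp // -expnD addnn -mul2n.
  have E2 : p ^ n.+1 = p ^ (2 * p) * p ^ (n.+1 - 2 * p) by rewrite -expnD subnKC.
  move: #|K| => k; rewrite E2 => /eqP; rewrite eqn_pmul2l ?expn_gt0 ?p0 //.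
  by move=> /eqP <-.
have NppE : N_pp n (p ^ d) = #|S| * #|K| * (p ^ d.-1) ^ n.+1.
  rewrite /N_pp -cB -(card_preim_const (g := @red p n (p ^ d))
     (Q := fun b => Phi (polyb b) \in S) (c := (p ^ d.-1) ^ n.+1)); last first.
    by move=> j _; exact: card_red.
  by apply: eq_card => a; rewrite in_set key in_set.
apply/eqP; rewrite eqr_div; first last.
- by rewrite Num.Theory.pnatr_eq0 -lt0n expn_gt0 p0.
- by rewrite NpE Num.Theory.pnatr_eq0 -lt0n expn_gt0 p0.
rewrite -!natrM Num.Theory.eqr_nat.
apply/eqP; rewrite NppE NpE cardS cK -expnM.
case: p Hp p0 pn hn {S cardS key K fib cB cK NppE NpE pd0} => [//|q] Hp _ pn hn.
rewrite factS subn1 /=.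
case: d d2 d0 => [//|e] d2 _.
have E : q.+1 * q.+1 ^ (n.+1 - 2 * q.+1) * q.+1 ^ (e * n.+1) * q.+1 ^ (2 * q.+1 - 1)
         = q.+1 ^ (e.+1 * n.+1).
  rewrite -expnS -!expnD; congr (_ ^ _); rewrite mulSn; lia.
rewrite -E.
move: (q.+1 ^ (n.+1 - 2 * q.+1)) (q.+1 ^ (e * n.+1)) (q.+1 ^ (2 * q.+1 - 1)) => X Y Z.
move: (q`!) (q ^ q.+1) => A B; clear E hn pn Hp d2.
nia.
Qed.
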